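(* For every list (any length and initial order) and every request sequence $\sigma$, in the full cost model, $$\mathrm{MTFO}(\sigma)+\mathrm{MTFE}(\sigma)\le 4\cdot\mathrm{OPT}(\sigma).$$
   Context: Static list update: a list of distinct items in some initial order; serving a request to the item at position $i$ (from the front) costs $i$ (full cost model); the accessed item may be moved closer to the front for free (free exchange); two adjacent items may be swapped at cost $1$ (paid exchange). $A(\sigma)$ is the total cost of algorithm $A$ and $\mathrm{OPT}(\sigma)$ the minimum cost of any offline algorithm from the same initial list. MTFO moves a requested item to the front on the 1st, 3rd, 5th, ... request to that item; MTFE on the 2nd, 4th, 6th, ... request; otherwise they leave it in place, and they make no paid exchanges. *)

(* Defs.v *)
From mathcomp Require Import all_boot.
From Stdlib Require Import ClassicalEpsilon.
Set Implicit Arguments. Unset Strict Implicit. Unset Printing Implicit Defensive.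

Section ListUpdate.
Variable T : eqType.

(* Cost of accessing x in list L (x assumed in L): its 1-based position. *)
Definition access_cost (x : T) (L : seq T) : nat := (index x L).+1.

(* Paid exchange: swap the items at (0-based) positions i and i+1
   (no-op if position i+1 does not exist; it is still charged 1). *)
Fixpoint swap_adj (i : nat) (L : seq T) : seq T :=
  match i, L with
  | 0, a :: b :: r => b :: a :: r
  | i'.+1, a :: r => a :: swap_adj i' r
  | _, _ => L
  end.

(* Free exchange: move x to (0-based) position j (only used with j <= index x L). *)
Definition move_to (j : nat) (x : T) (L : seq T) : seq T :=
  let L' := rem x L in take j L' ++ x :: drop j L'.

(* One step of an arbitrary offline algorithm: a list of paid adjacent
   swaps performed before serving the request, then the requested item is
   moved (for free) to position min(j, its current position). *)
Definition step := (seq nat * nat)%type.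
Definition step0 : step := ([::], 0).

Fixpoint offline_cost (A : seq step) (L : seq T) (s : seq T) : nat :=
  match s with
  | [::] => 0
  | x :: s' =>
      let: (sw, j) := head step0 A in
      let L1 := foldl (fun M i => swap_adj i M) L sw in
      let L2 := move_to (minn j (index x L1)) x L1 in
      size sw + access_cost x L1 + offline_cost (behead A) L2 s'
  end.

Lemma offline_cost_exists (L s : seq T) : exists n, exists A, offline_cost A L s = n.
Proof. by exists (offline_cost [::] L s), [::]. Qed.

Definition has_offline_cost (L s : seq T) : pred nat :=
  fun n => if excluded_middle_informative (exists A, offline_cost A L s = n)
           then true else false.

Lemma has_offline_cost_exists (L s : seq T) : exists n, has_offline_cost L s n.
Proof.
have [n Hn] := offline_cost_exists L s; exists n; rewrite /has_offline_cost.
by case: excluded_middle_informative.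
Qed.

Definition OPT (L s : seq T) : nat := ex_minn (has_offline_cost_exists L s).

(* Move-to-front on the k-th request to an item iff (k odd) == b? :
   [seen] are the previous requests; the current request to x is number
   (count_mem x seen).+1.  It moves x to the front iff odd (count_mem x seen) == b. *)
Fixpoint mtf_parity_cost (b : bool) (L seen s : seq T) : nat :=
  match s with
  | [::] => 0
  | x :: s' =>
      let L' := if odd (count_mem x seen) == b then x :: rem x L else L in
      access_cost x L + mtf_parity_cost b L' (x :: seen) s'
  end.

(* MTFO: moves to front on the 1st, 3rd, 5th, ... request to an item. *)
Definition MTFO (L s : seq T) : nat := mtf_parity_cost false L [::] s.
(* MTFE: moves to front on the 2nd, 4th, 6th, ... request to an item. *)
Definition MTFE (L s : seq T) : nat := mtf_parity_cost true L [::] s.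

End ListUpdate.

(* Main.v *)
Require Import Defs.
From mathcomp Require Import all_boot zify.
From Stdlib Require Import ClassicalEpsilon.
Set Implicit Arguments. Unset Strict Implicit. Unset Printing Implicit Defensive.

Lemma idx_inj (T : eqType) (x y : T) (M : seq T) : y \in M -> index y M = index x M -> y = x.
Proof.
move=> yM e. have := nth_index y yM. rewrite e.
have [xM|xM] := boolP (x \in M); first by rewrite nth_index.
move: (yM); rewrite -index_mem e memNindex //; lia.
Qed.

Lemma idx_neq (T : eqType) (x y : T) (M : seq T) : x \in M -> y != x -> index y M != index x M.
Proof.
move=> xM yx; apply/eqP => e.
have [yM|yM] := boolP (y \in M); first by move: yx; rewrite (idx_inj yM e) eqxx.
move: xM; rewrite -index_mem -e memNindex //; lia.
Qed.

Lemma idx_rem (T : eqType) (x y : T) (M : seq T) : x \in M -> y != x ->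
  index y (rem x M) = if index y M < index x M then index y M else (index y M).-1.
Proof.
elim: M => [//|z M IH] /=; rewrite inE => xM yx.
have [zx|zx] := eqVneq z x.
  subst z => /=; rewrite ?eqxx /= eq_sym (negPf yx) /=; lia.
rewrite /= ?(negPf zx) /=.
case: (eqVneq z y) => [zy|zy] //=.
move: xM; rewrite eq_sym (negPf zx) /= => xM.
have := idx_neq xM yx; rewrite IH //. case: ifP; case: ifP => //; lia.
Qed.

Lemma idx_mtf (T : eqType) (x y : T) (M : seq T) : x \in M -> y != x ->
  index y (x :: rem x M) = (if index y M < index x M then index y M else (index y M).-1).+1.
Proof. move=> xM yx /=. by rewrite eq_sym (negPf yx) idx_rem. Qed.

Lemma idx_mtf_x (T : eqType) (x : T) (M : seq T) : index x (x :: rem x M) = 0.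
Proof. by rewrite /= eqxx. Qed.

Lemma idx_move (T : eqType) (k : nat) (x y : T) (M : seq T) : x \in M -> y \in M -> y != x ->
  k <= index x M ->
  index y (move_to k x M) = let r := index y (rem x M) in if r < k then r else r.+1.
Proof.
move=> xM yM yx kx /=. rewrite /move_to index_cat.
have yR : y \in rem x M.
  by have := perm_to_rem xM => /perm_mem /(_ y); rewrite yM inE (negPf yx).
rewrite in_take //.
case: ifP => lt.
  have : y \in take k (rem x M) by rewrite in_take.
  move=> yT. rewrite -{2}(cat_take_drop k (rem x M)) index_cat yT //.
rewrite /= eq_sym (negPf yx).
have ks : k <= size (take k (rem x M)).
  rewrite size_take. move: yR; rewrite -index_mem => yR. case: ifP => //; lia.
have hs : size (take k (rem x M)) = k.
  rewrite size_take. move: yR; rewrite -index_mem => yR. case: ifP => //; lia.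
rewrite hs.
rewrite -[in RHS](cat_take_drop k (rem x M)) index_cat.
have -> : (y \in take k (rem x M)) = false by rewrite in_take // lt.
rewrite hs; lia.
Qed.

Lemma idx_move_x (T : eqType) (k : nat) (x : T) (M : seq T) : uniq M -> x \in M ->
  k <= index x M -> index x (move_to k x M) = k.
Proof.
move=> uM xM kx. rewrite /move_to index_cat.
have xT : (x \in take k (rem x M)) = false.
  apply/negP => /mem_take; by rewrite mem_rem_uniqF.
rewrite xT /= eqxx addn0 size_take size_rem //.
move: xM; rewrite -index_mem => xM. case: ifP => //; lia.
Qed.

Lemma perm_swap_adj (T : eqType) (i : nat) (M : seq T) : perm_eq (swap_adj i M) M.
Proof.
elim: M i => [|a r IH] [|i] //=.
- case: r IH => [|b r'] IH //=. by apply/permP => p /=; rewrite addnCA.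
- by rewrite perm_cons.
Qed.

Lemma idx_swap (T : eqType) (i : nat) (M : seq T) (y : T) : uniq M ->
  index y (swap_adj i M) = if i.+1 < size M then
    (if index y M == i then i.+1 else if index y M == i.+1 then i else index y M)
    else index y M.
Proof.
elim: M i => [|a r IH] [|i] //=.
- case: r IH => [|b r'] IH //= /and3P [] ; rewrite inE negb_or => /andP[ab ar] br ur.
  case: (eqVneq a y) => [<-|ay]; first by rewrite eq_sym (negPf ab).
  by case: (eqVneq b y).
- move=> /andP [ar ur]. rewrite IH //.
  case: (eqVneq a y) => [_|ay] /=; first by case: ifP.
  rewrite ltnS !eqSS. by case: ifP => //; case: ifP => //; case: ifP.
Qed.

Definition psi (o m e pa pb : bool) : nat :=
  match o, m, e with
  | false, false, false | true, true, true => 0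
  | false, true, true | true, false, false => 4
  | false, false, true => if pb then 1 else 2
  | false, true, false => if pb then 2 else 1
  | true, false, true => if pa then 2 else 1
  | true, true, false => if pa then 1 else 2
  end.

Lemma psi_flip (o o' m e pa pb : bool) : psi o' m e pa pb <= psi o m e pa pb + 4.
Proof. by case: o o' m e pa pb => [] [] [] [] [] []. Qed.

Lemma psi_reqA (o o' m e pa pb : bool) : (o ==> o') ->
  nat_of_bool (~~m) + nat_of_bool (~~e) + psi o' (if ~~pa then true else m) (if pa then true else e) (~~pa) pb
  <= 4 * nat_of_bool (~~o) + psi o m e pa pb.
Proof. by case: o o' m e pa pb => [] [] [] [] [] []. Qed.

Lemma psi_reqB (o o' m e pa pb : bool) : (o' ==> o) ->
  nat_of_bool m + nat_of_bool e + psi o' (if ~~pb then false else m) (if pb then false else e) pa (~~pb)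
  <= 4 * nat_of_bool o + psi o m e pa pb.
Proof. by case: o o' m e pa pb => [] [] [] [] [] []. Qed.

Lemma psi_diag (o pa pb : bool) : psi o o o pa pb = 0.
Proof. by case: o pa pb => [] [] []. Qed.

Definition bef (T : eqType) (M : seq T) (a b : T) : bool := index a M < index b M.

Lemma bef_mtf_x (T : eqType) (x b : T) (M : seq T) : b != x -> bef (x :: rem x M) x b.
Proof. by move=> bx; rewrite /bef /= eqxx eq_sym (negPf bx). Qed.

Lemma bef_mtf_to (T : eqType) (x a : T) (M : seq T) : a != x -> bef (x :: rem x M) a x = false.
Proof. by move=> ax; rewrite /bef /= eqxx eq_sym (negPf ax). Qed.

Lemma bef_mtf_o (T : eqType) (x y z : T) (M : seq T) : x \in M -> y != x -> z != x ->
  bef (x :: rem x M) y z = bef M y z.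
Proof.
move=> xM yx zx; rewrite /bef !idx_mtf //.
have := idx_neq xM yx; have := idx_neq xM zx.
case: ifP; case: ifP => h1 h2 /eqP ? /eqP ?; apply/idP/idP; lia.
Qed.

Lemma bef_move_o (T : eqType) (k : nat) (x y z : T) (M : seq T) : x \in M -> y \in M -> z \in M ->
  y != x -> z != x -> k <= index x M ->
  bef (move_to k x M) y z = bef M y z.
Proof.
move=> xM yM zM yx zx kx; rewrite /bef !idx_move //= !idx_rem //.
have := idx_neq xM yx; have := idx_neq xM zx.
case: ifP; case: ifP => ? ? /eqP ? /eqP ?; case: ifP; case: ifP => ? ?; apply/idP/idP; lia.
Qed.

Lemma bef_move_xA (T : eqType) (k : nat) (x b : T) (M : seq T) : uniq M -> x \in M -> b \in M ->
  b != x -> k <= index x M -> bef M x b -> bef (move_to k x M) x b.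
Proof.
move=> uM xM bM bx kx; have := idx_neq xM bx => /eqP ?; rewrite /bef idx_move_x // idx_move //= !idx_rem //.
case: ifP; case: ifP => ? ?; lia.
Qed.

Lemma bef_move_xB (T : eqType) (k : nat) (x a : T) (M : seq T) : uniq M -> x \in M -> a \in M ->
  a != x -> k <= index x M -> bef (move_to k x M) a x -> bef M a x.
Proof.
move=> uM xM aM ax kx; have := idx_neq xM ax => /eqP ?; rewrite /bef idx_move_x // idx_move //= !idx_rem //.
case: ifP; case: ifP => ? ?; lia.
Qed.

Lemma bef_anti (T : eqType) (M : seq T) (y z : T) : z \in M -> y != z -> bef M y z = ~~ bef M z y.
Proof. move=> zM yz; have := idx_neq zM yz => /eqP ?; rewrite /bef; apply/idP/idP; lia. Qed.

Definition pcost (T : eqType) (x : T) (M : seq T) (a b : T) : nat :=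
  if a == x then bef M b a else if b == x then bef M a b else false.

Definition st (T : eqType) (Lp Lo Le seen : seq T) (a b : T) : nat :=
  psi (bef Lp a b) (bef Lo a b) (bef Le a b) (odd (count_mem a seen)) (odd (count_mem b seen)).

Lemma pair_step (T : eqType) (L : seq T) (x a b : T) (M1 Lo Le seen : seq T) (k : nat) :
  uniq M1 -> uniq Lo -> uniq Le -> {subset L <= M1} -> {subset L <= Lo} -> {subset L <= Le} ->
  x \in L -> a \in L -> b \in L -> a != b -> k <= index x M1 ->
  pcost x Lo a b + pcost x Le a b +
  st (move_to k x M1) (if odd (count_mem x seen) == false then x :: rem x Lo else Lo)
     (if odd (count_mem x seen) == true then x :: rem x Le else Le) (x :: seen) a b
  <= 4 * pcost x M1 a b + st M1 Lo Le seen a b.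
Proof.
move=> u1 uo ue s1 so se xL aL bL ab kx.
rewrite /st /pcost /=.
case: (eqVneq a x) => [ea|ax].
  subst a. rewrite (negPf ab) add0n.
  have -> : odd (true + count_mem x seen) = ~~ odd (count_mem x seen) by [].
  have bx : b != x by rewrite eq_sym.
  have H1 : bef M1 x b ==> bef (move_to k x M1) x b.
    by apply/implyP; apply: bef_move_xA => //; auto.
  rewrite !(@bef_anti _ _ b x) //; try auto.
  have := psi_reqA (bef Lo x b) (bef Le x b) (odd (count_mem x seen)) (odd (count_mem b seen)) H1.
  by case: (odd (count_mem x seen)) => /=; rewrite ?bef_mtf_x.
rewrite add0n (eq_sym x b).
case: (eqVneq b x) => [eb|bx].
  subst b.
  have -> : odd (true + count_mem x seen) = ~~ odd (count_mem x seen) by [].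
  have H1 : bef (move_to k x M1) a x ==> bef M1 a x.
    by apply/implyP; apply: bef_move_xB => //; auto.
  have := psi_reqB (bef Lo a x) (bef Le a x) (odd (count_mem a seen)) (odd (count_mem x seen)) H1.
  by case: (odd (count_mem x seen)) => /=; rewrite ?bef_mtf_to.
rewrite /= !add0n.
rewrite bef_move_o //; try auto.
by case: (odd (count_mem x seen)) => /=; rewrite ?bef_mtf_o //; auto.
Qed.

Lemma count_idx_lt (T : eqType) (M : seq T) (k : nat) : uniq M ->
  count (fun a => index a M < k) M = minn k (size M).
Proof.
elim: M k => [|z M IH] k /=; first by rewrite minn0.
move=> /andP [zM uM]. rewrite eqxx.
rewrite (@eq_in_count _ _ (fun a => index a M < k.-1)); last first.
  move=> a aM /=. have -> : (z == a) = false by apply/eqP => e; subst; rewrite aM in zM.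
  case: k => //.
rewrite IH //. case: k => [|k] /=; first by rewrite min0n.
rewrite minnSS; lia.
Qed.

Lemma sum_bool_count (T : Type) (s : seq T) (P : pred T) :
  \sum_(a <- s) nat_of_bool (P a) = count P s.
Proof. elim: s => [|a s IH]; by rewrite ?big_nil ?big_cons ?IH. Qed.

Lemma cost_decomp (T : eqType) (L M : seq T) (x : T) : uniq L -> perm_eq M L -> x \in L ->
  \sum_(a <- L) \sum_(b <- L | a != b) pcost x M a b = 2 * index x M.
Proof.
move=> uL pML xL.
rewrite (bigD1_seq x) //=.
have -> : \sum_(b <- L | x != b) pcost x M x b = \sum_(b <- L | b != x) nat_of_bool (bef M b x).
  apply: eq_big => [b|b _]; first by rewrite eq_sym.
  by rewrite /pcost eqxx.
have -> : \sum_(a <- L | a != x) \sum_(b <- L | a != b) pcost x M a b =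
          \sum_(a <- L | a != x) nat_of_bool (bef M a x).
  rewrite big_seq_cond [RHS]big_seq_cond.
  apply: eq_bigr => a /andP [aL ax].
  rewrite big_mkcond (bigD1_seq x) //= ax /pcost.
  have axF : (a == x) = false by apply/negbTE.
  rewrite axF eqxx big1_seq ?addn0 //.
  by move=> i /andP [ix _]; rewrite (negbTE ix); case: ifP.
have E : \sum_(a <- L | a != x) nat_of_bool (bef M a x) = \sum_(a <- L) nat_of_bool (bef M a x).
  rewrite [RHS](bigD1_seq x) //= /bef ltnn. by [].
rewrite E sum_bool_count -((permP pML) _) addnn -mul2n.
have uM : uniq M by rewrite (perm_uniq pML).
have xM : x \in M by rewrite (perm_mem pML).
rewrite /bef count_idx_lt // (@minn_idPl _ _ _); first lia.
by apply: ltnW; rewrite index_mem.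
Qed.

Definition Phi (T : eqType) (L Lp Lo Le seen : seq T) : nat :=
  \sum_(a <- L) \sum_(b <- L | a != b) st Lp Lo Le seen a b.

Lemma phi_req (T : eqType) (L M1 Lo Le seen : seq T) (x : T) (k : nat) :
  uniq L -> perm_eq M1 L -> perm_eq Lo L -> perm_eq Le L -> x \in L -> k <= index x M1 ->
  2 * index x Lo + 2 * index x Le +
  Phi L (move_to k x M1) (if odd (count_mem x seen) == false then x :: rem x Lo else Lo)
     (if odd (count_mem x seen) == true then x :: rem x Le else Le) (x :: seen)
  <= 8 * index x M1 + Phi L M1 Lo Le seen.
Proof.
move=> uL p1 po pe xL kx.
have u1 : uniq M1 by rewrite (perm_uniq p1).
have uo : uniq Lo by rewrite (perm_uniq po).
have ue : uniq Le by rewrite (perm_uniq pe).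
have s1 : {subset L <= M1} by move=> y; rewrite (perm_mem p1).
have so : {subset L <= Lo} by move=> y; rewrite (perm_mem po).
have se : {subset L <= Le} by move=> y; rewrite (perm_mem pe).
have -> : 8 * index x M1 = 4 * (2 * index x M1) by lia.
rewrite -(cost_decomp uL po xL) -(cost_decomp uL pe xL) -(cost_decomp uL p1 xL) /Phi.
rewrite big_distrr /= -!big_split /=.
rewrite big_seq_cond [X in _ <= X]big_seq_cond.
apply: leq_sum => a /andP [aL _].
rewrite big_distrr /= -!big_split /=.
rewrite big_seq_cond [X in _ <= X]big_seq_cond.
apply: leq_sum => b /andP [bL ab].
exact: (pair_step seen u1 uo ue s1 so se xL aL bL ab kx).
Qed.

Definition ind (T : eqType) (M : seq T) (i : nat) (a b : T) : nat :=
  ((index a M == i) && (index b M == i.+1)) || ((index a M == i.+1) && (index b M == i)).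

Lemma st_swap (T : eqType) (M Lo Le seen : seq T) (i : nat) (a b : T) : uniq M ->
  st (swap_adj i M) Lo Le seen a b <= st M Lo Le seen a b + 4 * ind M i a b.
Proof.
move=> uM; rewrite /st /ind.
case h: (((index a M == i) && (index b M == i.+1)) || ((index a M == i.+1) && (index b M == i))) => /=;
  first by rewrite muln1 psi_flip.
rewrite muln0 addn0.
have -> : bef (swap_adj i M) a b = bef M a b.
  rewrite /bef !idx_swap //.
  case: ifP => // _.
  do ! case: ifP => ?; apply/idP/idP; lia.
by [].
Qed.

Lemma count_inj_le1 (T : eqType) (s : seq T) (f : T -> nat) (j : nat) :
  uniq s -> {in s &, injective f} -> count (fun b => f b == j) s <= 1.
Proof.
elim: s => [//|a s IH] /= /andP [as_ us] inj.
have inj' : {in s &, injective f} by move=> u v us' vs'; apply: inj; rewrite inE ?us' ?vs' orbT.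
case: (eqVneq (f a) j) => [fa|fa] /=; last by apply: IH.
suff -> : count (fun b => f b == j) s = 0 by [].
apply/eqP; rewrite eqn0Ngt -has_count; apply/hasPn => b bs; apply/negP => /eqP fb.
have ba : b = a by apply: inj; rewrite ?inE ?bs ?eqxx ?orbT // fb fa.
by move: as_; rewrite -ba bs.
Qed.

Lemma sum_ind_le1 (T : eqType) (L M : seq T) (j : nat) (P : pred T) :
  uniq L -> perm_eq M L -> \sum_(b <- L | P b) nat_of_bool (index b M == j) <= 1.
Proof.
move=> uL pML.
apply: leq_trans (_ : \sum_(b <- L) nat_of_bool (index b M == j) <= 1).
  rewrite [X in X <= _]big_mkcond /=; apply: leq_sum => b _; by case: ifP.
rewrite sum_bool_count; apply: count_inj_le1 => // u v uL' vL' e.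
apply: (@idx_inj _ v u M) => //. by rewrite (perm_mem pML).
Qed.

Lemma phi_swap (T : eqType) (L M Lo Le seen : seq T) (i : nat) :
  uniq L -> perm_eq M L -> Phi L (swap_adj i M) Lo Le seen <= Phi L M Lo Le seen + 8.
Proof.
move=> uL pML. have uM : uniq M by rewrite (perm_uniq pML).
rewrite /Phi.
apply: leq_trans (_ : \sum_(a <- L) \sum_(b <- L | a != b) (st M Lo Le seen a b + 4 * ind M i a b) <= _).
  apply: leq_sum => a _; apply: leq_sum => b _; exact: st_swap.
rewrite (eq_bigr (fun a => \sum_(b <- L | a != b) st M Lo Le seen a b +
   \sum_(b <- L | a != b) 4 * ind M i a b)); last by move=> a _; rewrite big_split.
rewrite big_split /= leq_add2l.
apply: leq_trans (_ : \sum_(a <- L) 4 * (nat_of_bool (index a M == i) + nat_of_bool (index a M == i.+1)) <= _).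
  apply: leq_sum => a _.
  rewrite -big_distrr /= leq_mul2l /=.
  apply: leq_trans (_ : \sum_(b <- L | a != b)
     (nat_of_bool (index a M == i) * nat_of_bool (index b M == i.+1) +
      nat_of_bool (index a M == i.+1) * nat_of_bool (index b M == i)) <= _).
    apply: leq_sum => b _; rewrite /ind.
    by case: (index a M == i); case: (index b M == i.+1); case: (index a M == i.+1); case: (index b M == i).
  rewrite big_split /= -!big_distrr /=.
  apply: leq_add.
    case: (index a M == i) => /=; rewrite ?mul0n ?mul1n //; exact: sum_ind_le1.
  case: (index a M == i.+1) => /=; rewrite ?mul0n ?mul1n //; exact: sum_ind_le1.
rewrite -big_distrr /= big_split /= !sum_bool_count.
have inj : {in L &, injective (fun b => index b M)}.
  move=> u v uL1 _ e; apply: (@idx_inj _ v u M) => //; by rewrite (perm_mem pML).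
have h1 := @count_inj_le1 _ L (fun b => index b M) i uL inj.
have h2 := @count_inj_le1 _ L (fun b => index b M) i.+1 uL inj.
lia.
Qed.

Lemma ptr (T : eqType) (s1 s2 s3 : seq T) : perm_eq s1 s2 -> perm_eq s2 s3 -> perm_eq s1 s3.
Proof. move=> h1 h2; exact: (perm_trans h1 h2). Qed.

Lemma perm_mtf (T : eqType) (x : T) (M : seq T) : x \in M -> perm_eq (x :: rem x M) M.
Proof. by move=> xM; rewrite perm_sym perm_to_rem. Qed.

Lemma perm_move (T : eqType) (k : nat) (x : T) (M : seq T) : x \in M ->
  perm_eq (move_to k x M) M.
Proof.
move=> xM; apply: (ptr _ (perm_mtf xM)).
rewrite /move_to -[in X in perm_eq _ X](cat_take_drop k (rem x M)).
by apply/permP => p; rewrite /= !count_cat /= addnCA.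
Qed.

Lemma perm_swaps (T : eqType) (sw : seq nat) (M : seq T) :
  perm_eq (foldl (fun M i => swap_adj i M) M sw) M.
Proof.
elim: sw M => [|i sw IH] M /=; first exact: perm_refl.
exact: (ptr (IH _) (perm_swap_adj _ _)).
Qed.

Lemma phi_swaps (T : eqType) (L Lo Le seen : seq T) (sw : seq nat) (M : seq T) :
  uniq L -> perm_eq M L ->
  Phi L (foldl (fun M i => swap_adj i M) M sw) Lo Le seen <= Phi L M Lo Le seen + 8 * size sw.
Proof.
move=> uL; elim: sw M => [|i sw IH] M pML /=; first by rewrite addn0.
apply: leq_trans (IH _ _) _; first exact: (ptr (perm_swap_adj _ _) pML).
have := phi_swap Lo Le seen i uL pML. lia.
Qed.


Lemma inv (T : eqType) (L : seq T) : uniq L -> forall s A Lp Lo Le seen,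
  perm_eq Lp L -> perm_eq Lo L -> perm_eq Le L -> all (fun x => x \in L) s ->
  2 * (mtf_parity_cost false Lo seen s + mtf_parity_cost true Le seen s)
  <= 8 * offline_cost A Lp s + Phi L Lp Lo Le seen.
Proof.
move=> uL; elim=> [|x s IH] A Lp Lo Le seen pp po pe /=; first by move=> _; rewrite muln0.
move=> /andP [xL aL].
case: (head step0 A) => sw j.
set L1 := foldl _ Lp sw.
have p1 : perm_eq L1 L by apply: (ptr (perm_swaps _ _) pp).
have x1 : x \in L1 by rewrite (perm_mem p1).
have xo : x \in Lo by rewrite (perm_mem po).
have xe : x \in Le by rewrite (perm_mem pe).
set k := minn j (index x L1).
have kx : k <= index x L1 by rewrite geq_minr.
set Lo' := if odd (count_mem x seen) == false then x :: rem x Lo else Lo.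
set Le' := if odd (count_mem x seen) == true then x :: rem x Le else Le.
have po' : perm_eq Lo' L by rewrite /Lo'; case: ifP => // _; apply: (ptr (perm_mtf xo) po).
have pe' : perm_eq Le' L by rewrite /Le'; case: ifP => // _; apply: (ptr (perm_mtf xe) pe).
have p2 : perm_eq (move_to k x L1) L by apply: (ptr (perm_move _ x1) p1).
have H1 := IH (behead A) _ Lo' Le' (x :: seen) p2 po' pe' aL.
have H2 := phi_req seen uL p1 po pe xL kx.
have H3 := phi_swaps Lo Le seen sw uL pp.
rewrite /access_cost.
move: H1 H2 H3; rewrite -/L1 -/k -/Lo' -/Le'. lia.
Qed.

Unset Implicit Arguments.

Theorem lemma10 (T : eqType) (L s : seq T) :
  uniq L -> all (fun x => x \in L) s ->
  MTFO L s + MTFE L s <= 4 * OPT L s.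
Proof.
move=> uL aL.
rewrite /OPT; case: ex_minnP => n Hn _.
move: Hn; rewrite /has_offline_cost; case: excluded_middle_informative => // [[A HA]] _.
have H := @inv T L uL s A L L L [::] (perm_refl L) (perm_refl L) (perm_refl L) aL.
have E : Phi L L L L [::] = 0.
  by rewrite /Phi big1 // => a _; rewrite big1 // => b _; rewrite /st psi_diag.
move: H; rewrite E /MTFO /MTFE HA; lia.
Qed.
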